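(* Let $d\ge 1$ be an integer, $\gamma^2>0$ and $\sigma^2\ge 0$. For a finite non-empty coalition $\mathcal{K}$ of participants, where participant $k$ has data size $D_k>0$, let $K=|\mathcal{K}|$ and define the generalization error of the model trained by $\mathcal{K}$ as $$\varepsilon_{\mathcal{K}}=\frac{d\gamma^2}{K^2}\sum_{k\in\mathcal{K}}\frac{1}{D_k}+\frac{K-1}{K}\sigma^2 .$$ Let $\mathcal{K}_a$ and $\mathcal{K}_b$ be two disjoint non-empty coalitions with $K_a=|\mathcal{K}_a|$, $K_b=|\mathcal{K}_b|$, and let $H_a=K_a\big/\sum_{k\in\mathcal{K}_a}D_k^{-1}$ and $H_b=K_b\big/\sum_{k\in\mathcal{K}_b}D_k^{-1}$ be the harmonic means of the data sizes in $\mathcal{K}_a$ and $\mathcal{K}_b$, and assume $H_a\le H_b$. Write $\varepsilon_a=\varepsilon_{\mathcal{K}_a}$, $\varepsilon_b=\varepsilon_{\mathcal{K}_b}$, $\varepsilon_{a+b}=\varepsilon_{\mathcal{K}_a\cup\mathcal{K}_b}$. Then $\varepsilon_{a+b}<\max\{\varepsilon_a,\varepsilon_b\}$ if and only if $$\frac{\sigma^2}{\gamma^2}<\frac{H_bK_b+K_a(2H_b-H_a)}{H_aH_b(K_a+K_b)/d}.$$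
   Context: This models federated learning with linear models: $d$ is the feature dimension, $\gamma^2$ the variance of Gaussian noise on training targets (data variance), and $\sigma^2$ the variance capturing divergence across clients' feature distributions (client variance). The displayed formula for $\varepsilon_{\mathcal{K}}$ is taken as the definition of the generalization error of the federated model trained by coalition $\mathcal{K}$. *)

(* Defs.v *)
From HB Require Import structures.
From mathcomp Require Import all_boot all_order all_algebra.
Set Implicit Arguments. Unset Strict Implicit. Unset Printing Implicit Defensive.
Import Order.TTheory GRing.Theory Num.Theory.
Local Open Scope ring_scope.

Definition gen_err {R : realFieldType} {T : finType} (d : nat) (gamma2 sigma2 : R)
  (D : T -> R) (K : {set T}) : R :=
  d%:R * gamma2 / (#|K|%:R ^+ 2) * (\sum_(k in K) (D k)^-1)
  + (#|K|%:R - 1) / #|K|%:R * sigma2.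

Definition harm_mean {R : realFieldType} {T : finType} (D : T -> R) (K : {set T}) : R :=
  #|K|%:R / (\sum_(k in K) (D k)^-1).

(* Main.v *)
Require Import Defs.
From HB Require Import structures.
From mathcomp Require Import all_boot all_order all_algebra.
From mathcomp Require Import ring lra.
Import Order.TTheory GRing.Theory Num.Theory.
Local Open Scope ring_scope.

Section Core.
Variable R : realFieldType.

Definition ee (dd g s k S : R) := dd * g / (k ^+ 2) * S + (k - 1) / k * s.

Lemma core (dd g s a b Sa Sb : R) :
  0 < dd -> 0 < g -> 0 < a -> 0 < b -> 0 < Sa -> 0 < Sb ->
  a / Sa <= b / Sb ->
  (ee dd g s (a + b) (Sa + Sb) < Num.max (ee dd g s a Sa) (ee dd g s b Sb)
   <->
   s / g < ((b / Sb) * b + a * (2 * (b / Sb) - a / Sa))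
           / ((a / Sa) * (b / Sb) * (a + b) / dd)).
Proof.
move=> hd hg ha hb hSa hSb hH.
set Ha := a / Sa; set Hb := b / Sb.
have hHa : 0 < Ha by rewrite divr_gt0.
have hHb : 0 < Hb by rewrite divr_gt0.
set Qa := (Hb * b + a * (2 * Hb - Ha)) / (Ha * Hb * (a + b) / dd).
set Qb := (Ha * a + b * (2 * Ha - Hb)) / (Ha * Hb * (a + b) / dd).
have nz : forall x : R, 0 < x -> x != 0 by move=> x /gt_eqF ->.
have Ea : ee dd g s a Sa - ee dd g s (a + b) (Sa + Sb) = b * g / (a * (a + b)) * (Qa - s / g).
  rewrite /ee /Qa /Ha /Hb; field.
  by rewrite !nz // addr_gt0.
have Eb : ee dd g s b Sb - ee dd g s (a + b) (Sa + Sb) = a * g / (b * (a + b)) * (Qb - s / g).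
  rewrite /ee /Qb /Ha /Hb; field.
  by rewrite !nz // addr_gt0.
have EQ : Qa - Qb = 2 * dd * (Hb - Ha) / (Ha * Hb).
  rewrite /Qa /Qb; field.
  by rewrite !nz // addr_gt0.
have pa : 0 < b * g / (a * (a + b)) by apply: divr_gt0; rewrite ?mulr_gt0 ?addr_gt0.
have pb : 0 < a * g / (b * (a + b)) by apply: divr_gt0; rewrite ?mulr_gt0 ?addr_gt0.
have QQ : Qb <= Qa.
  rewrite -subr_ge0 EQ; apply: divr_ge0; last by rewrite mulr_ge0 // ltW.
  by rewrite mulr_ge0 ?subr_ge0 // mulr_ge0 // ltW.
have Ha' : (ee dd g s (a + b) (Sa + Sb) < ee dd g s a Sa) = (s / g < Qa).
  by rewrite -subr_gt0 Ea pmulr_rgt0 // subr_gt0.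
have Hb' : (ee dd g s (a + b) (Sa + Sb) < ee dd g s b Sb) = (s / g < Qb).
  by rewrite -subr_gt0 Eb pmulr_rgt0 // subr_gt0.
rewrite lt_max Ha' Hb'; split.
- by case/orP => // h; apply: lt_le_trans h QQ.
- by move=> ->.
Qed.
End Core.

Theorem corollary1 (R : realFieldType) (T : finType) (d : nat) (gamma2 sigma2 : R)
  (D : T -> R) (Ka Kb : {set T}) :
  (1 <= d)%N -> 0 < gamma2 -> 0 <= sigma2 ->
  (forall k, 0 < D k) ->
  Ka != set0 -> Kb != set0 -> [disjoint Ka & Kb] ->
  harm_mean D Ka <= harm_mean D Kb ->
  (gen_err d gamma2 sigma2 D (Ka :|: Kb)
     < Num.max (gen_err d gamma2 sigma2 D Ka) (gen_err d gamma2 sigma2 D Kb)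
   <->
   sigma2 / gamma2 <
     (harm_mean D Kb * #|Kb|%:R + #|Ka|%:R * (2 * harm_mean D Kb - harm_mean D Ka))
     / (harm_mean D Ka * harm_mean D Kb * (#|Ka|%:R + #|Kb|%:R) / d%:R)).
Proof.
move=> hd hg hs hD nA nB dis.
have cU : #|Ka :|: Kb| = (#|Ka| + #|Kb|)%N.
  by rewrite cardsU disjoint_setI0 // cards0 subn0.
have sU : \sum_(k in Ka :|: Kb) (D k)^-1 = \sum_(k in Ka) (D k)^-1 + \sum_(k in Kb) (D k)^-1.
  rewrite -bigU //; apply: eq_bigl => i; by rewrite !inE.
have pos : forall K : {set T}, K != set0 -> 0 < \sum_(k in K) (D k)^-1.
  move=> K /set0Pn [x hx]; rewrite (bigD1 x) //=.
  apply: ltr_pwDl; first by rewrite invr_gt0.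
  by apply: sumr_ge0 => i _; rewrite invr_ge0 ltW.
have cpos : forall K : {set T}, K != set0 -> 0 < #|K|%:R :> R.
  by move=> K /set0Pn [x hx]; rewrite ltr0n; apply/card_gt0P; exists x.
rewrite /harm_mean /gen_err cU natrD sU.
have := @core R d%:R gamma2 sigma2 _ _ _ _ _ hg (cpos _ nA) (cpos _ nB) (pos _ nA) (pos _ nB).
rewrite /ee; apply; by rewrite ltr0n.
Qed.
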